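(* Let $p$ be a prime. For $i\in\{1,2\}$ let $D_i$ be a finite group, $\psi_i:D_i\to\mathrm{GL}_{d_i}(\mathbb{F}_p)$ a representation, and $G_i=\mathbb{Z}_p^{d_i}\rtimes_{\psi_i}D_i$, where $p\nmid|D_1||D_2|$. Then the following are equivalent: (i) $G_1\cong G_2$; (ii) there exists an isomorphism $\sigma:D_1\to D_2$ such that $\psi_2\circ\sigma\cong\psi_1$ (as representations of $D_1$). Moreover, if (ii) holds, there exists an isomorphism $f:G_1\to G_2$ with $f(D_1)=D_2$ and $f|_{D_1}=\sigma$.
   Context: $\mathbb{Z}_p^{d}\rtimes_\psi D$ denotes the semidirect product in which $D$ acts on $\mathbb{Z}_p^d=\mathbb{F}_p^d$ via $\psi$; $D_i$ is identified with its canonical complement in $G_i$. *)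

(* Defs.v *)
From HB Require Import structures.
From mathcomp Require Import all_boot all_order all_algebra all_fingroup all_solvable all_field all_character.
Set Implicit Arguments. Unset Strict Implicit. Unset Printing Implicit Defensive.
Local Open Scope group_scope.

(* The semidirect product  F_p^d  ><|_psi  D, for psi : D -> GL_d(F_p) given as
   an mx_representation on row vectors (acting on the right: v |-> v *m psi a). *)
Definition sdprodT (p : nat) (dT : finGroupType) (D : {group dT}) (d : nat)
  (psi : mx_representation 'F_p D d) : finGroupType :=
  sdprod_groupType ('MR psi)%gact.

Definition complD (p : nat) (dT : finGroupType) (D : {group dT}) (d : nat)
  (psi : mx_representation 'F_p D d) : {set sdprodT psi} :=
  (sdpair2 ('MR psi)%gact @* D)%g.

Lemma isom_sub_pre (aT rT : finGroupType) (D1 : {group aT}) (D2 : {group rT})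
  (s : {morphism D1 >-> rT}) : isom D1 D2 s -> D1 \subset s @*^-1 D2.
Proof.
case/isomP=> _ <-; by rewrite -sub_morphim_pre.
Qed.

Definition comp_repr (R : comUnitRingType) (aT rT : finGroupType)
  (D1 : {group aT}) (D2 : {group rT}) (s : {morphism D1 >-> rT})
  (iso : isom D1 D2 s) (n : nat) (rG : mx_representation R D2 n) :
  mx_representation R D1 n :=
  subg_repr (morphpre_repr s rG) (isom_sub_pre iso).

(* Main.v *)
Require Import Defs.
From mathcomp Require Import all_boot all_order all_algebra all_fingroup all_solvable all_field all_character.
Set Implicit Arguments. Unset Strict Implicit. Unset Printing Implicit Defensive.
Import GRing.Theory.

Module Aux.
Section Helpers.
Local Open Scope group_scope.


Section Basic.
Variables (p : nat) (dT : finGroupType) (D : {group dT}) (d : nat)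
  (psi : mx_representation 'F_p D d).
Local Notation to := ('MR psi)%gact.
Local Notation G := (sdprodT psi).

Lemma sd_mul1 (u v : G) : (u * v).1 = u.1 * v.1.
Proof. by []. Qed.

Lemma sd_mul2 (u v : G) : (u * v).2 = (to u.2 v.1 + v.2)%R.
Proof. by []. Qed.

Lemma sd_in (u : G) : u.1 \in D.
Proof. by case: u => [[a x]] /= /setXP[]. Qed.

Lemma sdpair1_val (x : 'rV['F_p]_d) : pair_of_sd (sdpair1 to x) = (1, x).
Proof. by rewrite /sdpair1 insubdK // inE group1 inE. Qed.

Lemma sdpair2_val (a : dT) : a \in D -> pair_of_sd (sdpair2 to a) = (a, 0%R).
Proof. by move=> Da; rewrite /sdpair2 insubdK // inE Da group1. Qed.

Lemma sdpair1_add (x y : 'rV['F_p]_d) : sdpair1 to (x + y)%R = sdpair1 to x * sdpair1 to y.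
Proof. exact: (@sdpair1_morphM _ _ _ _ to x y (in_setT _) (in_setT _)). Qed.

Lemma sdpair_conj (x : 'rV['F_p]_d) a : a \in D ->
  sdpair1 to x ^ sdpair2 to a = sdpair1 to (x *m psi a)%R.
Proof. by move=> Da; rewrite -sdpair_act ?inE //= mx_repr_actE. Qed.

Lemma sdpair1_conj (x y : 'rV['F_p]_d) : sdpair1 to x ^ sdpair1 to y = sdpair1 to x.
Proof. by rewrite conjgE -sdpair1_add addrC sdpair1_add mulKg. Qed.

End Basic.


Section Basic2.
Variables (p : nat) (hp : prime p) (dT : finGroupType) (D : {group dT}) (d : nat)
  (psi : mx_representation 'F_p D d) (hD : ~~ (p %| #|D|)).
Local Notation to := ('MR psi)%gact.
Local Notation G := (sdprodT psi).
Definition Vs := sdpair1 to @* [set: 'rV['F_p]_d].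

Lemma sdprod_VK : Vs ><| complD psi = [set: G].
Proof. exact: sdprod_sdpair. Qed.

Lemma inVs (u : G) : (u \in Vs) = (u.1 == 1).
Proof.
apply/idP/eqP.
  by case/morphimP=> x _ _ ->; rewrite sdpair1_val.
move=> u1; rewrite [u]sdpairE u1 morph1 mul1g; apply: mem_morphim; exact: in_setT.
Qed.

Lemma Vs_Hall : p.-Hall([set: G]) Vs.
Proof.
rewrite /pHall subsetT /pgroup.
rewrite (card_injm (injm_sdpair1 to)) ?subsetT // cardsT card_mx card_Fp //.
rewrite pnatX pnat_id // ?orbT /=.
rewrite -(index_sdprod sdprod_VK) /complD (card_injm (injm_sdpair2 to)) //.
by rewrite p'natE.
Qed.

Lemma Vs_pcore : 'O_p([set: G]) = Vs.
Proof.
apply: normal_Hall_pcore Vs_Hall _.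
by case/sdprod_context: sdprod_VK.
Qed.

End Basic2.
End Helpers.
Section AddMx.
Local Open Scope ring_scope.

Lemma additive_mx (p n m : nat) (h : 'rV['F_p]_n -> 'rV['F_p]_m)
  (hD : forall u v, h (u + v) = h u + h v) :
  exists B : 'M['F_p]_(n, m), forall u, h u = u *m B.
Proof.
have h0 : h 0 = 0 by apply: (addrI (h 0)); rewrite -hD !addr0.
have hN : forall k u, h (u *+ k) = h u *+ k.
  by elim=> [|k IH] u; rewrite ?mulr0n ?h0 // !mulrS hD IH.
have hZ : forall (c : 'F_p) u, h (c *: u) = c *: h u.
  move=> [k hk] u; rewrite -(natr_Zp (Ordinal hk)) !scaler_nat; exact: hN.
exists (\matrix_(i < n) h (delta_mx 0 i)) => u.
rewrite mulmx_sum_row.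
rewrite {1}[u]row_sum_delta.
rewrite (big_morph h hD h0); apply: eq_bigr => i _.
by rewrite hZ rowK.
Qed.

End AddMx.
Section Helpers2.
Local Open Scope group_scope.


Section Fwd.
Variables (p : nat) (hp : prime p) (dT1 dT2 : finGroupType)
  (D1 : {group dT1}) (D2 : {group dT2}) (d1 d2 : nat)
  (psi1 : mx_representation 'F_p D1 d1) (psi2 : mx_representation 'F_p D2 d2)
  (hD1 : ~~ (p %| #|D1|)) (hD2 : ~~ (p %| #|D2|)).
Local Notation to1 := ('MR psi1)%gact.
Local Notation to2 := ('MR psi2)%gact.
Variables (phi : {morphism [set: sdprodT psi1] >-> sdprodT psi2})
  (injphi : 'injm phi) (imphi : phi @* [set: sdprodT psi1] = [set: sdprodT psi2]).

Lemma phiV : phi @* Vs psi1 = Vs psi2.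
Proof.
rewrite -(Vs_pcore hp psi1 hD1) -(Vs_pcore hp psi2 hD2).
by rewrite (injm_pcore injphi) // imphi.
Qed.

Lemma phi_s1 v : exists w, phi (sdpair1 to1 v) = sdpair1 to2 w.
Proof.
have : phi (sdpair1 to1 v) \in Vs psi2.
  by rewrite -phiV mem_morphim // ?in_setT // mem_morphim ?in_setT.
by case/morphimP=> w _ _ ->; exists w.
Qed.

Lemma phi_mx : exists B : 'M['F_p]_(d1, d2),
  forall v, phi (sdpair1 to1 v) = sdpair1 to2 (v *m B)%R.
Proof.
have ex v : exists w, phi (sdpair1 to1 v) == sdpair1 to2 w.
  by have [w ->] := phi_s1 v; exists w.
pose h v := xchoose (ex v).
have hE v : phi (sdpair1 to1 v) = sdpair1 to2 (h v) by apply/eqP; exact: xchooseP (ex v).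
have hD u v : h (u + v)%R = (h u + h v)%R.
  apply: (injmP (injm_sdpair1 to2)); rewrite ?in_setT //.
  by rewrite /= sdpair1_add -!hE -morphM ?in_setT // -sdpair1_add.
have [B hB] := additive_mx hD.
by exists B => v; rewrite hE hB.
Qed.

Definition sig_f (a : dT1) : dT2 := (phi (sdpair2 to1 a)).1.

Lemma sigM : {in D1 &, {morph sig_f : a b / a * b}}.
Proof. by move=> a b Da Db; rewrite /sig_f morphM // morphM ?in_setT. Qed.

Definition sigm := Morphism sigM.

Lemma phi_s2 a : phi (sdpair2 to1 a) = sdpair2 to2 (sig_f a) * sdpair1 to2 (phi (sdpair2 to1 a)).2.
Proof. exact: sdpairE. Qed.

Lemma sig_intertwine (B : 'M['F_p]_(d1, d2))
  (hB : forall v, phi (sdpair1 to1 v) = sdpair1 to2 (v *m B)%R) a (v : 'rV['F_p]_d1) :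
  a \in D1 -> (v *m psi1 a *m B)%R = (v *m B *m psi2 (sig_f a))%R.
Proof.
move=> Da; apply: (injmP (injm_sdpair1 to2)); rewrite ?in_setT //=.
rewrite -hB -sdpair_conj // morphJ ?in_setT // hB phi_s2 conjgM.
by rewrite sdpair_conj ?sd_in // sdpair1_conj.
Qed.

Lemma sig_isom : isom D1 D2 sigm.
Proof.
apply/isomP; split.
  apply/subsetP=> a /[!inE] /andP[Da /eqP sa1].
  have : phi (sdpair2 to1 a) \in Vs psi2 by rewrite inVs; apply/eqP.
  rewrite -phiV => /morphimP[u _ Vu Eu].
  have Eu' : u = sdpair2 to1 a by apply: (injmP injphi); rewrite ?in_setT.
  have : sdpair2 to1 a \in (Vs psi1 :&: complD psi1) by rewrite inE [_ \in complD _]mem_morphim // andbT -Eu'.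
  rewrite /Vs /complD im_sdpair_TI inE => /eqP s1.
  by apply/eqP; apply: (injmP (injm_sdpair2 to1)); rewrite /= ?morph1.
apply/eqP; rewrite eqEsubset; apply/andP; split.
  by apply/subsetP=> _ /morphimP[a _ Da ->]; rewrite /= /sig_f sd_in.
apply/subsetP=> b Db.
have : sdpair2 to2 b \in phi @* [set: sdprodT psi1] by rewrite imphi in_setT.
case/morphimP=> g _ _ Eg.
have Eb : b = (sdpair2 to2 b).1 by rewrite sdpair2_val.
rewrite Eb Eg [g]sdpairE morphM ?in_setT // sd_mul1.
have [w ->] := phi_s1 g.2.
rewrite sdpair1_val mulg1; apply: mem_morphim; exact: sd_in.
Qed.

End Fwd.


Section Bwd.
Variables (p : nat) (dT1 dT2 : finGroupType)
  (D1 : {group dT1}) (D2 : {group dT2}) (d : nat)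
  (psi1 : mx_representation 'F_p D1 d) (psi2 : mx_representation 'F_p D2 d).
Local Notation to1 := ('MR psi1)%gact.
Local Notation to2 := ('MR psi2)%gact.
Variables (sigma : {morphism D1 >-> dT2}) (iso : isom D1 D2 sigma)
  (B : 'M['F_p]_d) (uB : B \in unitmx)
  (hB : forall a, a \in D1 -> (psi1 a *m B = B *m psi2 (sigma a))%R).

Lemma sigD a : a \in D1 -> sigma a \in D2.
Proof. by case/isomP: iso => _ <- Da; apply: mem_morphim. Qed.

Definition fHf (v : 'rV['F_p]_d) : sdprodT psi2 := sdpair1 to2 (v *m B)%R.
Lemma fHM : {in [set: 'rV['F_p]_d] &, {morph fHf : u v / u * v}}.
Proof. by move=> u v _ _; rewrite /fHf -sdpair1_add -mulmxDl. Qed.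
Definition fH := Morphism fHM.

Definition fKf (a : dT1) : sdprodT psi2 := sdpair2 to2 (sigma a).
Lemma fKM : {in D1 &, {morph fKf : a b / a * b}}.
Proof. by move=> a b Da Db; rewrite /fKf morphM // morphM // sigD. Qed.
Definition fK := Morphism fKM.

Lemma actf : {in [set: 'rV['F_p]_d] & D1, morph_act to1 'J fH fK}.
Proof.
move=> x a _ Da /=; rewrite /fHf /fKf sdpair_conj ?sigD //.
rewrite mx_repr_actE //; congr (sdpair1 _ _).
by have := congr1 (mulmx x) (hB Da); rewrite !mulmxA.
Qed.

Local Notation ff := (xsdprodm actf).

Lemma ff_s2 a : a \in D1 -> ff (sdpair2 to1 a) = sdpair2 to2 (sigma a).
Proof.
move=> Da; rewrite /xsdprodm sdprodmEr ?mem_morphim //.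
have E : invm (injm_sdpair2 to1) (sdpair2 to1 a) = a := invmE _ Da.
exact: (congr1 fKf E).
Qed.

Lemma sig_onto b : b \in D2 -> exists2 a, a \in D1 & b = sigma a.
Proof.
case/isomP: iso => _ <- /morphimP[a _ Da ->]; by exists a.
Qed.

Lemma ff_isom : isom [set: sdprodT psi1] [set: sdprodT psi2] ff.
Proof.
apply/isomP; split.
  rewrite injm_xsdprodm; apply/and3P; split.
  - apply/injmP=> u v _ _ /= E.
    have := injmP (injm_sdpair1 to2) _ _ (in_setT _) (in_setT _) E.
    exact: (can_inj (mulmxK uB)).
  - apply/injmP=> a b Da Db /= E.
    have := injmP (injm_sdpair2 to2) _ _ (sigD Da) (sigD Db) E.
    by apply: (injmP (isom_inj iso)).
  - rewrite -subG1 -(im_sdpair_TI to2) setISS //; apply/subsetP.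
      by move=> _ /morphimP[v _ _ ->]; apply: mem_morphim; rewrite in_setT.
    by move=> _ /morphimP[a _ Da ->]; apply: mem_morphim; exact: sigD.
rewrite im_xsdprodm; apply/eqP; rewrite eqEsubset subsetT /= -(im_sdpair to2).
apply: mulgSS; apply/subsetP.
  move=> _ /morphimP[w _ _ ->].
  apply/morphimP; exists (w *m invmx B)%R; rewrite ?in_setT //=.
  by rewrite /fHf mulmxKV.
move=> _ /morphimP[b _ Db ->]; have [a Da ->] := sig_onto Db.
by apply: (mem_morphim fK).
Qed.

Lemma ff_compl : ff @* complD psi1 = complD psi2.
Proof.
apply/eqP; rewrite eqEsubset; apply/andP; split; apply/subsetP.
  move=> _ /morphimP[y _ /morphimP[a _ Da ->] ->]; rewrite -[_ \in _]/(xsdprodm actf (sdpair2 to1 a) \in complD psi2) ff_s2 //.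
  by apply: mem_morphim; exact: sigD.
move=> _ /morphimP[b _ Db ->]; have [a Da ->] := sig_onto Db.
apply/morphimP; exists (sdpair2 to1 a); [exact: in_setT | exact: mem_morphim | exact: esym (ff_s2 Da)].
Qed.

End Bwd.
End Helpers2.

Lemma mx_eq1 (F : fieldType) m n (B : 'M[F]_(m, n)) (C : 'M[F]_(n, m)) :
  (forall v : 'rV_m, v *m B *m C = v)%R -> (B *m C = 1%:M)%R.
Proof.
move=> h; apply/row_matrixP=> i.
by rewrite row_mul -{1}[B]mul1mx row_mul h.
Qed.

Lemma mx_eqv (F : fieldType) m n (X Y : 'M[F]_(m, n)) :
  (forall v : 'rV_m, v *m X = v *m Y)%R -> X = Y.
Proof.
move=> h; apply/row_matrixP=> i.
by rewrite -[X]mul1mx -[Y]mul1mx !row_mul h.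
Qed.

End Aux.
Import Aux.


Theorem lemma5p2 (p : nat) (hp : prime p)
  (dT1 dT2 : finGroupType) (D1 : {group dT1}) (D2 : {group dT2})
  (d1 d2 : nat)
  (psi1 : mx_representation 'F_p D1 d1) (psi2 : mx_representation 'F_p D2 d2)
  (hcop : ~~ (p %| #|D1| * #|D2|)) :
  ( ([set: sdprodT psi1] \isog [set: sdprodT psi2])%g
    <->
    (exists (sigma : {morphism D1 >-> dT2}) (iso : isom D1 D2 sigma),
        mx_rsim psi1 (comp_repr iso psi2)) )
  /\
  (forall (sigma : {morphism D1 >-> dT2}) (iso : isom D1 D2 sigma),
      mx_rsim psi1 (comp_repr iso psi2) ->
      exists f : {morphism [set: sdprodT psi1] >-> sdprodT psi2},
        [/\ isom [set: sdprodT psi1] [set: sdprodT psi2] f,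
            (f @* complD psi1)%g = complD psi2
          & {in D1, forall a,
               f (sdpair2 ('MR psi1)%gact a) = sdpair2 ('MR psi2)%gact (sigma a)}]).
Proof.
have hD1 : ~~ (p %| #|D1|) by apply: contra hcop; apply: dvdn_mulr.
have hD2 : ~~ (p %| #|D2|) by apply: contra hcop; apply: dvdn_mull.
have back : forall (sigma : {morphism D1 >-> dT2}) (iso : isom D1 D2 sigma),
      mx_rsim psi1 (comp_repr iso psi2) ->
      exists f : {morphism [set: sdprodT psi1] >-> sdprodT psi2},
        [/\ isom [set: sdprodT psi1] [set: sdprodT psi2] f,
            (f @* complD psi1)%g = complD psi2
          & {in D1, forall a,
               f (sdpair2 ('MR psi1)%gact a) = sdpair2 ('MR psi2)%gact (sigma a)}].
  move=> sigma iso [B e12 rfB hB]; subst d2.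
  have uB : B \in unitmx by rewrite -row_free_unit.
  have hB' : forall a, a \in D1 -> (psi1 a *m B = B *m psi2 (sigma a))%R := hB.
  exists (xsdprod_morphism (actf iso hB')); split.
  - exact: ff_isom.
  - exact: ff_compl.
  - by move=> a Da; apply: ff_s2.
split=> //; split; last first.
  by case=> sigma [iso rs]; have [f [isof _ _]] := back sigma iso rs; apply/isogP; exists f; case/isomP: isof.
case/isogP=> phi injphi imphi.
have sT : [set: sdprodT psi2] \subset (phi @* [set: sdprodT psi1])%g by rewrite imphi.
pose phi' := restrm sT (invm injphi).
have injphi' : ('injm phi')%g by rewrite injm_restrm ?injm_invm.
have imphi' : (phi' @* [set: sdprodT psi2])%g = [set: sdprodT psi1].
  by rewrite im_restrm -{1}imphi im_invm.
have [B hB] := phi_mx hp hD1 hD2 injphi imphi.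
have [C hC] := phi_mx hp hD2 hD1 injphi' imphi'.
have BC : (B *m C = 1%:M)%R.
  apply: mx_eq1 => v; apply: (injmP (injm_sdpair1 ('MR psi1)%gact)); rewrite ?in_setT //=.
  by rewrite -hC -hB /phi' /=; exact: (invmE injphi (in_setT _)).
have CB : (C *m B = 1%:M)%R.
  apply: mx_eq1 => v; apply: (injmP (injm_sdpair1 ('MR psi2)%gact)); rewrite ?in_setT //=.
  rewrite -hB -hC /phi' /=; apply: (invmK injphi); by rewrite imphi in_setT.
have le12 : (d1 <= d2)%N.
  rewrite -{1}(mxrank1 'F_p d1) -BC; apply: leq_trans (mxrankM_maxl _ _) (rank_leq_col _).
have le21 : (d2 <= d1)%N.
  rewrite -{1}(mxrank1 'F_p d2) -CB; apply: leq_trans (mxrankM_maxl _ _) (rank_leq_col _).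
have e12 : d1 = d2 by apply/eqP; rewrite eqn_leq le12 le21.
have rfB : row_free B.
  rewrite /row_free eqn_leq rank_leq_row /=.
  by rewrite -{1}(mxrank1 'F_p d1) -BC mxrankM_maxl.
exists (sigm phi), (sig_isom hp hD1 hD2 injphi imphi).
apply: (MxReprSim e12 rfB) => a Da /=.
apply: mx_eqv => v; rewrite !mulmxA.
exact: (sig_intertwine hB).
Qed.
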